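(* Let $S$ be a ring with $1$ and $R$ a subring of $S$ with $1\in R$. Suppose there is a unit $x\in S$ such that $x+1$ is also a unit and $x^{-1}Rx=(x+1)^{-1}R(x+1)=R$. Then either $(x+1)^{-1}\in R$, or $I_{x+1}:=R\cap(x+1)R$ is an ideal of $R$ with $I_{x+1}\neq R$ and $x^{-1}ux-u\in I_{x+1}$ for all $u\in R$. *)

(* Defs.v *)
From mathcomp Require Import all_boot all_algebra.
Set Implicit Arguments. Unset Strict Implicit. Unset Printing Implicit Defensive.
Import GRing.Theory.
Local Open Scope ring_scope.

Definition is_inverse (S : pzRingType) (u ui : S) : Prop :=
  u * ui = 1 /\ ui * u = 1.

Definition conj_stable (S : pzRingType) (R : {pred S}) (u ui : S) : Prop :=
  forall s : S, (exists2 r, r \in R & s = ui * r * u) <-> s \in R.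

Definition Iset (S : pzRingType) (R : {pred S}) (a : S) : S -> Prop :=
  fun s => s \in R /\ exists2 r, r \in R & s = a * r.

Definition is_ideal_of (S : pzRingType) (R : {pred S}) (I : S -> Prop) : Prop :=
  [/\ forall s, I s -> s \in R,
      I 0,
      forall a b, I a -> I b -> I (a - b),
      forall r a, r \in R -> I a -> I (r * a)
    & forall r a, r \in R -> I a -> I (a * r)].

(* Main.v *)
Require Import Defs.
From mathcomp Require Import all_boot all_algebra.
Import GRing.Theory.
Local Open Scope ring_scope.

Theorem lemma2p4 (S : pzRingType) (R : {pred S}) (x xi yi : S)
  (hR : subring_closed R)
  (hx : is_inverse x xi) (hy : is_inverse (x + 1) yi)
  (hcx : conj_stable R x xi) (hcy : conj_stable R (x + 1) yi) :
  yi \in R \/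
  (is_ideal_of R (Iset R (x + 1)) /\
   ~ (forall s, Iset R (x + 1) s <-> s \in R) /\
   (forall u, u \in R -> Iset R (x + 1) (xi * u * x - u))).
Proof.
case: hR => R1 RB0 RM0.
have RB : forall a b, a \in R -> b \in R -> a - b \in R by move=> a b Ha Hb; exact: RB0.
have RM : forall a b, a \in R -> b \in R -> a * b \in R by move=> a b Ha Hb; exact: RM0.
have R0 : 0 \in R by rewrite -(subrr 1); apply: RB.
case: hx => xxi xix; case: hy => yyi yiy.
set y := x + 1 in yyi yiy hcy *.
have cx : forall r, r \in R -> xi * r * x \in R.
  by move=> r Hr; apply/hcx; exists r.
have cy : forall r, r \in R -> yi * r * y \in R.
  by move=> r Hr; apply/hcy; exists r.
case: (boolP (yi \in R)) => Hyi; [by left | right].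
split; [split|split].
- by move=> s [].
- by split=> //; exists 0 => //; rewrite mulr0.
- move=> a b [Ha [ra Hra Ea]] [Hb [rb Hrb Eb]]; split; first exact: RB.
  rewrite Ea Eb.
  by exists (ra - rb); [apply: RB | rewrite mulrBr].
- move=> r a Hr [Ha [ra Hra Ea]]; split; first exact: RM.
  rewrite Ea; exists ((yi * r * y) * ra); first by apply: RM => //; apply: cy.
  by rewrite !mulrA yyi mul1r.
- move=> r a Hr [Ha [ra Hra Ea]]; split; first exact: RM.
  rewrite Ea; by exists (ra * r); [apply: RM | rewrite mulrA].
- move=> H; have [_ [r Hr E]] := (proj2 (H 1) R1).
  have : yi = r by rewrite -[r]mul1r -yiy -mulrA -E mulr1.
  by move=> Er; move: Hyi; rewrite Er Hr.
- move=> u Hu; split; first by apply: RB => //; apply: cx.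
  exists (xi * u * x - yi * u * y); first by apply: RB; [apply: cx|apply: cy].
  have yxi : y * xi = 1 + xi by rewrite /y mulrDl xxi mul1r.
  rewrite mulrBr !mulrA yxi yyi mul1r mulrDl mul1r /y mulrDr mulr1.
  rewrite mulrDl opprD addrA; congr (_ - _).
  by rewrite addrC addrA addNr add0r.
Qed.
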